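(* Let $n\geq 3$ and let $P=[p_{ij}]$ be the $n\times n$ symmetric matrix with $p_{ii}=x_i\geq 0$ ($1\le i\le n$), $p_{i,i+2}=p_{i+2,i}=y_i\geq 0$ ($1\le i\le n-2$), and all other entries equal to $0$. Then $P$ is infinitely divisible if and only if $P$ is positive semidefinite and neither of the sequences $(y_2,y_4,y_6,\ldots)$ and $(y_1,y_3,y_5,\ldots)$ (indices at most $n-2$) has two consecutive positive entries. In particular, for $n=3$ and $n=4$, $P$ is infinitely divisible if and only if $P$ is positive semidefinite.
   Context: For a nonnegative matrix $A=[a_{ij}]$ and $r>0$, $A^{\circ r}=[a_{ij}^r]$. A nonnegative symmetric matrix $A$ is infinitely divisible if $A^{\circ r}$ is positive semidefinite for every $r>0$. *)

(* Defs.v *)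
From HB Require Import structures.
From mathcomp Require Import all_boot all_order all_algebra.
From mathcomp Require Import reals exp.
Set Implicit Arguments. Unset Strict Implicit. Unset Printing Implicit Defensive.
Import Order.TTheory GRing.Theory Num.Theory.
Local Open Scope ring_scope.

Definition psd (R : realType) (n : nat) (A : 'M[R]_n) : Prop :=
  forall v : 'cV[R]_n, 0 <= ((v^T *m A *m v) 0 0).

Definition hpow (R : realType) (n : nat) (A : 'M[R]_n) (r : R) : 'M[R]_n :=
  \matrix_(i, j) powR (A i j) r.

Definition inf_div (R : realType) (n : nat) (A : 'M[R]_n) : Prop :=
  (forall i j, 0 <= A i j) /\ A^T = A /\
  (forall r : R, 0 < r -> psd (hpow A r)).

(* The matrix P of the paper, entries indexed 1-based through x, y:
   P_{ii} = x_i, P_{i,i+2} = P_{i+2,i} = y_i, all others 0.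
   Here row/column k : 'I_n corresponds to paper index k+1. *)
Definition Pmat (R : realType) (n : nat) (x y : nat -> R) : 'M[R]_n :=
  \matrix_(i, j)
    if i == j :> nat then x i.+1
    else if j == i.+2 :> nat then y i.+1
    else if i == j.+2 :> nat then y j.+1
    else 0.

(* Main.v *)
Require Import Defs.
From HB Require Import structures.
From mathcomp Require Import all_boot all_order all_algebra.
From mathcomp Require Import reals exp.
Import Order.TTheory GRing.Theory Num.Theory.
Local Open Scope ring_scope.
From mathcomp Require Import ring lra zify.

Lemma sum_delta_nat (R : realType) (f : nat -> R) (k n : nat) :
  \sum_(0 <= j < n) (j == k)%:R * f j = (k < n)%:R * f k.
Proof.
elim: n => [|n IH]; first by rewrite big_geq // mul0r.
rewrite big_nat_recr //= IH.
have [h|h|h] := ltngtP k n.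
- by rewrite /= ?mulr0n ?mulr1n ?mul0r ?mul1r ?addr0 ltnS (ltnW h) mul1r.
- by rewrite ltnS leqNgt h /= ?mulr0n ?mul0r ?addr0.
- by rewrite h ltnS leqnn /= ?mulr0n ?mulr1n ?mul0r ?mul1r ?add0r.
Qed.

Lemma amgm (R : realType) (A B C u w : R) :
  0 <= A -> 0 <= C -> B ^+ 2 <= A * C -> 0 <= A * u ^+ 2 + 2 * B * u * w + C * w ^+ 2.
Proof.
move=> hA hC hB.
case: (ltgtP A 0) => [|hA'|hA']; first by rewrite ltNge hA.
- have h : 0 <= A * (A * u ^+ 2 + 2 * B * u * w + C * w ^+ 2).
    have -> : A * (A * u ^+ 2 + 2 * B * u * w + C * w ^+ 2) =
       (A * u + B * w) ^+ 2 + (A * C - B ^+ 2) * w ^+ 2 by ring.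
    by apply: addr_ge0; [apply: sqr_ge0 | apply: mulr_ge0; [rewrite subr_ge0|apply: sqr_ge0]].
  by rewrite pmulr_rge0 in h.
- subst A. have : B ^+ 2 <= 0 by rewrite mul0r in hB.
  move=> hB0. have -> : B = 0 by apply/eqP; rewrite -sqrf_eq0 eq_le hB0 sqr_ge0.
  rewrite !mul0r mulr0 !add0r !mul0r add0r; apply: mulr_ge0 => //; exact: sqr_ge0.
Qed.

Lemma minor2 (R : realType) (a b c : R) :
  (forall al be, 0 <= a * al ^+ 2 + 2 * b * al * be + c * be ^+ 2) ->
  0 <= a -> 0 <= c -> b ^+ 2 <= a * c.
Proof.
move=> H ha hc.
have h1 := H (- b) a.
have h2 := H (- (c + 1)) b.
case: (ltgtP a 0) => [|ha'|ha']; first by rewrite ltNge ha.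
- nra.
- subst a. nra.
Qed.

Lemma pair_ge0 (R : realType) (d e w : nat -> R) i :
  0 <= d i -> 0 <= d i.+2 -> 0 <= e i -> e i ^+ 2 <= d i * d i.+2 ->
  0 <= d i * w i ^+ 2 + 2 * e i * w i * w i.+2 + (0 < e i)%R%:R * (d i.+2 * w i.+2 ^+ 2).
Proof.
move=> h0 h2 he hee.
case: (ltrP 0 (e i)) => h /=.
- have := @amgm R (d i) (e i) (d i.+2) (w i) (w i.+2) h0 h2 hee. rewrite /= ?mulr1n ?mul1r; lra.
- have -> : e i = 0 by apply/eqP; rewrite eq_le h he.
  rewrite mulr0 !mul0r !addr0; apply: mulr_ge0 => //; exact: sqr_ge0.
Qed.

Lemma band_sum_ge0 (R : realType) (d e w : nat -> R) :
  (forall i, 0 <= d i) -> (forall i, 0 <= e i) ->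
  (forall i, e i ^+ 2 <= d i * d i.+2) -> (forall i, ~ (0 < e i /\ 0 < e i.+2)) ->
  forall N, 0 <= \sum_(0 <= i < N.+2) (d i * w i ^+ 2 + 2 * e i * w i * w i.+2)
     + (0 < e N)%R%:R * (d N.+2 * w N.+2 ^+ 2) + (0 < e N.+1)%R%:R * (d N.+3 * w N.+3 ^+ 2).
Proof.
move=> hd he hee hc.
elim => [|N IH].
- rewrite big_nat_recr //= big_nat_recr //= big_geq // add0r.
  have p0 := @pair_ge0 R d e w 0%N (hd 0%N) (hd 2%N) (he 0%N) (hee 0%N).
  have p1 := @pair_ge0 R d e w 1%N (hd 1%N) (hd 3%N) (he 1%N) (hee 1%N).
  lra.
- rewrite big_nat_recr //=.
  have G0 : 0 <= d N.+2 * w N.+2 ^+ 2 by apply: mulr_ge0 => //; exact: sqr_ge0.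
  case: (ltrP 0 (e N.+2)) => h.
  + have cN : (0 < e N) = false.
      by apply/negbTE/negP => h'; apply: (hc N); split.
    rewrite cN /= mul0r addr0 in IH.
    have p := @pair_ge0 R d e w N.+2 (hd N.+2) (hd N.+4) (he N.+2) (hee N.+2).
    rewrite h in p; lra.
  + have e0 : e N.+2 = 0 by apply/eqP; rewrite eq_le h he.
    rewrite e0 mulr0 !mul0r !addr0.
    have cle : (0 < e N)%R%:R * (d N.+2 * w N.+2 ^+ 2) <= d N.+2 * w N.+2 ^+ 2.
      by case: (0 < e N); rewrite /= ?mul1r ?mul0r.
    lra.
Qed.

Definition band (R : realType) (d e : nat -> R) (i j : nat) : R :=
  if i == j then d i else if j == i.+2 then e i else if i == j.+2 then e j else 0.
Arguments band {R}.

Lemma band_split (R : realType) (d e : nat -> R) i j :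
  band d e i j = (i == j)%:R * d i + (i == j.+2)%:R * e j + (j == i.+2)%:R * e i.
Proof.
rewrite /band.
case: (eqVneq i j) => [->|h1].
  have -> : (j == j.+2) = false by apply/eqP; lia.
  by rewrite ?eqxx /= ?mul1r ?mul0r ?addr0.
case: (eqVneq j i.+2) => [->|h2].
  have -> : (i == i.+4) = false by apply/eqP; lia.
  by rewrite ?eqxx /= ?mul1r ?mul0r ?add0r ?addr0.
case: (eqVneq i j.+2) => [->|h3].
  by rewrite ?eqxx /= ?mul1r ?mul0r ?add0r ?addr0.
by rewrite /= ?mul0r ?addr0.
Qed.

Lemma quad_band (R : realType) m (d e : nat -> R) (v : 'cV[R]_m.+1) (w : nat -> R) :
  (forall k, w k = if (k < m.+1)%N then v (inord k) 0 else 0) ->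
  ((v^T *m (\matrix_(i,j) band d e i j) *m v) 0 0) =
   \sum_(0 <= i < m.+1) (d i * w i ^+ 2 + 2 * e i * w i * w i.+2).
Proof.
move=> hw.
have wc : forall k, (k < m.+1)%:R * w k = w k.
  by move=> k; rewrite hw; case: ltnP => _; rewrite /= ?mul1r ?mul0r.
rewrite mxE.
transitivity (\sum_(0 <= j < m.+1) \sum_(0 <= i < m.+1) w i * band d e i j * w j).
  rewrite big_mkord; apply: eq_bigr => j _; rewrite mxE big_distrl big_mkord.
  apply: eq_bigr => i _; rewrite !mxE !hw !ltn_ord !inord_val //.
transitivity (\sum_(0 <= j < m.+1) ((w j * d j * w j + w j.+2 * e j * w j) +
              \sum_(0 <= i < m.+1) (j == i.+2)%:R * (w i * e i * w j))).
  apply: eq_big_nat => j hj.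
  under eq_bigr => i _ do rewrite band_split !mulrDr !mulrDl.
  rewrite !big_split /=.
  congr (_ + _ + _).
  - under eq_bigr => i _ do rewrite (mulrC (w i)) -!mulrA.
    rewrite sum_delta_nat; have -> : (j < m.+1)%N by case/andP: hj.
    by rewrite mul1r !mulrA (mulrC (d j)).
  - under eq_bigr => i _ do rewrite (mulrC (w i)) -!mulrA.
    rewrite sum_delta_nat -[in RHS](wc j.+2); ring.
  - by apply: eq_bigr => i _; ring.
rewrite big_split /= exchange_big_nat /= -big_split /=.
apply: eq_bigr => i _.
rewrite sum_delta_nat.
have -> : (i.+2 < m.+1)%:R * (w i * e i * w i.+2) = w i * e i * w i.+2.
  by rewrite -[in RHS](wc i.+2); ring.
ring.
Qed.

Lemma delta_quad (R : realType) n (M : 'M[R]_n) (i j : 'I_n) :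
  (delta_mx 0 i *m M *m delta_mx j 0 : 'M_1) 0 0 = M i j.
Proof. by rewrite -rowE -colE !mxE. Qed.

Lemma quad3 (R : realType) n (M : 'M[R]_n) (i0 i1 i2 : 'I_n) (a b c : R) :
  let v := a *: delta_mx i0 0 + b *: delta_mx i1 0 + c *: delta_mx i2 0 : 'cV_n in
  (v^T *m M *m v) 0 0 =
    a * a * M i0 i0 + a * b * M i0 i1 + a * c * M i0 i2
  + b * a * M i1 i0 + b * b * M i1 i1 + b * c * M i1 i2
  + c * a * M i2 i0 + c * b * M i2 i1 + c * c * M i2 i2.
Proof.
rewrite /= !linearD /= !linearZ /= !trmx_delta.
rewrite !mulmxDl -!scalemxAl.
rewrite -!rowE -!colE !mxE.
ring.
Qed.

Lemma powR_le_scale (R : realType) (p q u r : R) :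
  0 <= p -> 0 < q -> 0 < r -> p / q <= u ->
  powR p r <= powR u r * powR q r.
Proof.
move=> hp hq hr hu.
have -> : p = (p / q) * q by rewrite divfK // gt_eqF.
have hpq : 0 <= p / q by apply: divr_ge0 => //; exact: ltW.
rewrite powRM //; last exact: ltW.
apply: ler_wpM2r; first exact: powR_ge0.
apply: (ge0_ler_powR (ltW hr)) => //; rewrite nnegrE //.
exact: le_trans hu.
Qed.

Lemma small_r (R : realType) (p q s : R) :
  0 <= p -> 0 < q -> 0 < s -> exists2 r, 0 < r & powR p r < powR q r + powR s r.
Proof.
move=> hp hq hs.
set u := p / q + p / s + 2.
have hpq : 0 <= p / q by apply: divr_ge0 => //; exact: ltW.
have hps : 0 <= p / s by apply: divr_ge0 => //; exact: ltW.
have u1 : 1 < u by rewrite /u; lra.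
have lu : 0 < ln u by apply: ln_gt0.
have l32 : 0 < ln (3 / 2 : R) by apply: ln_gt0; lra.
exists (ln (3/2) / ln u); first by apply: divr_gt0.
have hu : powR u (ln (3/2) / ln u) = 3 / 2.
  rewrite /powR gt_eqF; last lra.
  rewrite divfK ?gt_eqF // lnK //; rewrite posrE; lra.
have r0 : 0 < ln (3/2) / ln u :> R by apply: divr_gt0.
have hpqu : p / q <= u by rewrite /u; lra.
have hpsu : p / s <= u by rewrite /u; lra.
have h1 := @powR_le_scale R p q u _ hp hq r0 hpqu.
have h2 := @powR_le_scale R p s u _ hp hs r0 hpsu.
rewrite hu in h1 h2.
have Q0 := powR_gt0 (ln (3/2) / ln u) hq.
have S0 := powR_gt0 (ln (3/2) / ln u) hs.
lra.
Qed.

Lemma forw_real (R : realType) (a b c d e : R) :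
  0 <= a -> 0 < b -> 0 <= c -> 0 < d -> 0 <= e ->
  (forall r, 0 < r -> forall al be ga : R,
     0 <= al ^+ 2 * powR a r + 2 * al * be * powR b r + be ^+ 2 * powR c r
          + 2 * be * ga * powR d r + ga ^+ 2 * powR e r) -> False.
Proof.
move=> ha hb hc hd he H.
have H1 := H 1 ltr01.
rewrite !powRr1 in H1; try exact: ltW.
case: (ltgtP a 0) => [|ha'|ha']; first by rewrite ltNge ha.
2: { subst a; have := H1 (c + 1) (- b) 0; nra. }
case: (ltgtP e 0) => [|he'|he']; first by rewrite ltNge he.
2: { subst e; have := H1 0 (- d) (c + 1); nra. }
have [r r0 hr] := @small_r R (a * c * e) (b * b * e) (d * d * a)
   (mulr_ge0 (mulr_ge0 ha hc) he) (mulr_gt0 (mulr_gt0 hb hb) he') (mulr_gt0 (mulr_gt0 hd hd) ha').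
rewrite !powRM in hr; try done; try (by apply: mulr_ge0; apply: ltW); try exact: ltW; try exact: mulr_ge0.
set A := powR a r in hr *; set B := powR b r in hr *; set C := powR c r in hr *;
set D := powR d r in hr *; set E := powR e r in hr *.
have A0 : 0 < A by apply: powR_gt0.
have E0 : 0 < E by apply: powR_gt0.
have := H r r0 (B * E) (- (A * E)) (D * A).
have -> : (B * E) ^+ 2 * A + 2 * (B * E) * - (A * E) * B + (- (A * E)) ^+ 2 * C +
   2 * - (A * E) * (D * A) * D + (D * A) ^+ 2 * E
   = (A * E) * (A * C * E - B * B * E - D * D * A) by ring.
have AE : 0 < A * E by apply: mulr_gt0.
rewrite pmulr_rge0 //; lra.
all: done.
Qed.

Lemma PmatE (R : realType) n (x y : nat -> R) (i j : 'I_n) :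
  Pmat n x y i j = band (fun k => x k.+1) (fun k => y k.+1) i j.
Proof. by rewrite mxE. Qed.

Lemma hpowPE (R : realType) n (x y : nat -> R) r (i j : 'I_n) :
  hpow (Pmat n x y) r i j = powR (band (fun k => x k.+1) (fun k => y k.+1) i j) r.
Proof. by rewrite /hpow mxE PmatE. Qed.

Lemma band_dd (R : realType) (d e : nat -> R) i : band d e i i = d i.
Proof. by rewrite /band eqxx. Qed.
Lemma band_up (R : realType) (d e : nat -> R) i : band d e i i.+2 = e i.
Proof. rewrite /band eqxx; have -> : (i == i.+2) = false by apply/eqP; lia. by []. Qed.
Lemma band_lo (R : realType) (d e : nat -> R) i : band d e i.+2 i = e i.
Proof.
rewrite /band eqxx; have -> : (i.+2 == i) = false by apply/eqP; lia.
by have -> : (i == i.+4) = false by apply/eqP; lia.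
Qed.
Lemma band_far (R : realType) (d e : nat -> R) i j :
  i != j -> j != i.+2 -> i != j.+2 -> band d e i j = 0.
Proof. by move=> h1 h2 h3; rewrite /band (negbTE h1) (negbTE h2) (negbTE h3). Qed.

Lemma quad3' (R : realType) n (M : 'M[R]_n) (i0 i1 i2 : 'I_n) (a b c : R) :
  ((a *: delta_mx i0 0 + b *: delta_mx i1 0 + c *: delta_mx i2 0 : 'cV_n)^T *m M
     *m (a *: delta_mx i0 0 + b *: delta_mx i1 0 + c *: delta_mx i2 0 : 'cV_n)) 0 0 =
    a * a * M i0 i0 + a * b * M i0 i1 + a * c * M i0 i2
  + b * a * M i1 i0 + b * b * M i1 i1 + b * c * M i1 i2
  + c * a * M i2 i0 + c * b * M i2 i1 + c * c * M i2 i2.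
Proof. exact: quad3. Qed.

Theorem corollary2p6 (R : realType) (n : nat) (x y : nat -> R)
  (hn : (3 <= n)%N)
  (hx : forall i, (1 <= i <= n)%N -> 0 <= x i)
  (hy : forall i, (1 <= i <= n - 2)%N -> 0 <= y i) :
  (inf_div (Pmat n x y) <->
     (psd (Pmat n x y) /\
      (* no two consecutive positive entries in (y_2, y_4, ...) *)
      (forall k, ~~ odd k -> (1 <= k)%N -> (k + 2 <= n - 2)%N ->
          ~ (0 < y k /\ 0 < y (k + 2)%N)) /\
      (* no two consecutive positive entries in (y_1, y_3, ...) *)
      (forall k, odd k -> (1 <= k)%N -> (k + 2 <= n - 2)%N ->
          ~ (0 < y k /\ 0 < y (k + 2)%N))))
  /\ ((n == 3)%N || (n == 4)%N -> (inf_div (Pmat n x y) <-> psd (Pmat n x y))).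
Proof.
set P := Pmat n x y.
have hx' : forall i, (i < n)%N -> 0 <= x i.+1 by move=> i hi; apply: hx; lia.
have hy' : forall i, (i.+2 < n)%N -> 0 <= y i.+1 by move=> i hi; apply: hy; lia.
have NN : forall i j, 0 <= P i j.
  move=> i j; rewrite /P PmatE /band.
  case: ifP => h1; first exact: hx'.
  case: ifP => h2; first by apply: hy'; rewrite -(eqP h2).
  case: ifP => h3 //; apply: hy'; rewrite -(eqP h3) //.
have SYM : P^T = P.
  apply/matrixP => i j; rewrite mxE /P !PmatE /band.
  have [h|h] := eqVneq (i : nat) j; first by rewrite h ?eqxx.
  case: eqP => h1; case: eqP => h2 //; lia.
have MINOR : psd P -> forall i, (i.+2 < n)%N -> y i.+1 ^+ 2 <= x i.+1 * x i.+3.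
  move=> hP i hi.
  have hi0 : (i < n)%N by lia.
  apply: minor2; last (by apply: hx'); last (by apply: hx').
  move=> al be.
  have := hP (al *: delta_mx (Ordinal hi0) 0 + be *: delta_mx (Ordinal hi) 0
               + 0 *: delta_mx (Ordinal hi0) 0).
  rewrite quad3' /P !PmatE /= band_dd band_up band_lo band_dd.
  lra.
have HP : forall r, 0 < r -> forall i j : 'I_n, hpow P r i j =
   band (fun k => if (k < n)%N then powR (x k.+1) r else 0)
        (fun k => if (k.+2 < n)%N then powR (y k.+1) r else 0) i j.
  move=> r r0 i j; rewrite mxE /P PmatE /band.
  case: ifP => h1; first by rewrite ltn_ord.
  case: ifP => h2; first by rewrite -(eqP h2) ltn_ord.
  case: ifP => h3; first by rewrite -(eqP h3) ltn_ord.
  by rewrite powR0 // gt_eqF.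
have MAIN : inf_div P <-> (psd P /\ forall k, (1 <= k)%N -> (k + 2 <= n - 2)%N ->
          ~ (0 < y k /\ 0 < y (k + 2)%N)).
  split.
  - case=> _ [_ hr].
    have hP1 : hpow P 1 = P.
      by apply/matrixP => i j; rewrite mxE powRr1.
    split; first by rewrite -hP1; apply: hr.
    move=> k k1 k2 [yk yk2].
    case: k k1 k2 yk yk2 => [|k] // _ k2 yk yk2.
    have o0 : (k < n)%N by lia.
    have o1 : (k.+2 < n)%N by lia.
    have o2 : (k.+4 < n)%N by lia.
    rewrite addn2 in yk2.
    apply: (@forw_real R (x k.+1) (y k.+1) (x k.+3) (y k.+3) (x k.+4.+1)) => //.
    + by apply: hx'.
    + by apply: hx'.
    + by apply: hx'.
    move=> r r0 al be ga.
    have := hr r r0 (al *: delta_mx (Ordinal o0) 0 + be *: delta_mx (Ordinal o1) 0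
               + ga *: delta_mx (Ordinal o2) 0).
    rewrite quad3' /P !hpowPE /= band_dd band_up band_lo band_dd.
    rewrite band_up band_lo band_dd.
    rewrite !band_far; try (apply/eqP; lia).
    rewrite powR0 ?gt_eqF //.
    lra.
  - case=> hP hc; split; first exact: NN; split; first exact: SYM.
    move=> r r0 v.
    set d := fun k => if (k < n)%N then powR (x k.+1) r else 0.
    set e := fun k => if (k.+2 < n)%N then powR (y k.+1) r else 0.
    have -> : hpow P r = \matrix_(i, j) band d e i j.
      by apply/matrixP => i j; rewrite [RHS]mxE HP.
    have hd : forall i, 0 <= d i.
      by move=> i; rewrite /d; case: ifP => _ //; exact: powR_ge0.
    have he : forall i, 0 <= e i.
      by move=> i; rewrite /e; case: ifP => _ //; exact: powR_ge0.
    have hee : forall i, e i ^+ 2 <= d i * d i.+2.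
      move=> i; rewrite /e; case: ifP => h.
      - rewrite /d; have -> : (i < n)%N by lia. rewrite h.
        rewrite expr2 -powRM; try exact: hy'.
        rewrite -powRM; try (apply: hx'; lia).
        apply: (ge0_ler_powR (ltW r0)); rewrite ?nnegrE.
        + by apply: mulr_ge0; apply: hy'.
        + by apply: mulr_ge0; apply: hx'; lia.
        + by rewrite -expr2; apply: MINOR.
      - by rewrite expr2 mul0r; apply: mulr_ge0.
    have hnc : forall i, ~ (0 < e i /\ 0 < e i.+2).
      move=> i; rewrite /e; case: ifP => h1; last by case; rewrite ltxx.
      case: ifP => h2; last by case=> _; rewrite ltxx.
      case=> p1 p2.
      have y1 := @gt0_powR R _ r r0 (hy' i h1) p1.
      have y2 := @gt0_powR R _ r r0 (hy' _ h2) p2.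
      apply: (hc i.+1); [lia | lia | rewrite addn2; split => //].
    have [N hN] : exists N, n = N.+2 by exists n.-2; lia.
    move: v d e hd he hee hnc; rewrite hN => v d e hd he hee hnc.
    set w := fun k => if (k < N.+2)%N then v (inord k) 0 else 0.
    rewrite (@quad_band R N.+1 d e v w) //.
    have := @band_sum_ge0 R d e w hd he hee hnc N.
    have w2 : w N.+2 = 0 by rewrite /w ltnn.
    have w3 : w N.+3 = 0 by rewrite /w; have -> : (N.+3 < N.+2)%N = false by lia.
    clearbody w.
    have t2 : d N.+2 * w N.+2 ^+ 2 = 0 by rewrite w2 expr2 !mulr0.
    have t3 : d N.+3 * w N.+3 ^+ 2 = 0 by rewrite w3 expr2 !mulr0.
    by rewrite t2 t3 !mulr0 !addr0.
split.
- rewrite MAIN; split.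
  + case=> hP hc; split => //; split => k _; exact: hc.
  + case=> hP [h1 h2]; split => // k k1 k2; case: (boolP (odd k)) => ho.
    * exact: h2.
    * exact: h1.
- move=> h3; rewrite MAIN; split; first by case.
  move=> hP; split => // k k1 k2; move: h3 => /orP[] /eqP hn3; lia.
Qed.
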